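(* Let $q$ be a prime power and let $r$ be a prime dividing $q-1$. Then for any positive integer $d$ and any integer $1\le k\le r^d-1$, there exists a polynomial $f\in\mathbb{F}_q[x]$ of degree $k$ that divides $x^{r^d}-1$ and satisfies $f(1)\neq 0$. *)

(* Defs.v *)
From mathcomp Require Import all_boot all_order all_algebra all_field.

(* Main.v *)
Require Import Defs.
From mathcomp Require Import all_boot all_order all_algebra all_field.
From mathcomp Require Import cyclic zify.
Import GRing.Theory.
Local Open Scope ring_scope.
Lemma prim_r (F : finFieldType) (r : nat) : prime r -> (r %| #|F| - 1)%N ->
  exists z : F, r.-primitive_root z.
Proof.
move=> pr rd.
have n_gt0 : (0 < #|F| - 1)%N.
  have : (1 < #|F|)%N by rewrite (cardD1 0) (cardD1 1) !inE oner_neq0.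
  lia.
set rs := [seq x <- enum F | x != 0].
have : has (#|F| - 1).-primitive_root rs.
  apply: has_prim_root => //.
  - apply/allP => x; rewrite mem_filter => /andP[x0 _].
    apply/unity_rootP; apply: (mulfI x0); rewrite mulr1 -exprS.
    have -> : (#|F| - 1).+1 = #|F| by have := n_gt0; lia.
    exact: expf_card.
  - by rewrite filter_uniq ?enum_uniq.
  - have := cardC1 (0:F); rewrite cardE /enum_mem -enumT => ->.
    by rewrite subn1.
case/hasP => z _ zp.
exists (z ^+ ((#|F| - 1) %/ r)); exact: dvdn_prim_root.
Qed.
Lemma fact_comp (F : fieldType) (r m : nat) (z : F) : r.-primitive_root z ->
  'X^(r * m) - 1 = \prod_(i < r) ('X^m - (z ^+ i)%:P).
Proof.
move=> pz.
have := factor_Xn_sub_1 pz.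
move/(congr1 (fun p => p \Po 'X^m)).
rewrite comp_polyB comp_Xn_poly comp_polyC -exprM mulnC => <-.
rewrite big_mkord.
rewrite (big_morph (fun p => p \Po 'X^m) (fun p q => comp_polyM p q 'X^m) (comp_polyC 1 'X^m)).
by apply: eq_bigr => i _; rewrite comp_polyB comp_polyX comp_polyC.
Qed.
Lemma main_ind (F : fieldType) (r : nat) (z : F) : r.-primitive_root z ->
  forall e k, (k < r ^ e)%N -> exists f : {poly F},
    size f = k.+1 /\ f %| 'X^(r ^ e) - 1 /\ f.[1] != 0.
Proof.
case: r => [|r] pz; first by have := prim_order_gt0 pz.
have r_gt0 : (0 < r.+1)%N by [].
set P := fun (m j : nat) => \prod_(i < j) ('X^m - (z ^+ i.+1)%:P) : {poly F}.
elim=> [|e IH] k.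
  rewrite expn0 ltnS leqn0 => /eqP ->.
  exists 1; rewrite size_poly1 dvd1p hornerC oner_neq0; done.
set m := (r.+1 ^ e)%N => km.
have m_gt0 : (0 < m)%N by rewrite expn_gt0.
have [h [sh [dh h1]]] := IH (k %% m)%N (ltn_pmod _ m_gt0).
set j := (k %/ m)%N.
have jr : (j < r.+1)%N.
  by rewrite ltn_divLR // /m -expnS.
have mon : forall j, P m j \is monic.
  by move=> j'; apply: monic_prod => i _; apply: monicXnsubC.
have sP : forall j, size (P m j) = (j * m).+1.
  elim=> [|j' IHj]; first by rewrite /P big_ord0 size_poly1.
  rewrite /P big_ord_recr /= size_Mmonic ?monicXnsubC // -?size_poly_eq0.
    by rewrite -/(P m j') IHj size_XnsubC //; lia.
  by rewrite -/(P m j') IHj.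
exists (h * P m j); split; last split.
- rewrite size_Mmonic ?mon // ?sh ?sP; last by rewrite -size_poly_eq0 sh.
  have := divn_eq k m; rewrite -/j; lia.
- rewrite expnS (fact_comp _ _ _ _ pz) big_ord_recl /=.
  rewrite expr0 -/m; apply: dvdp_mul => //.
  have -> : (r = j + (r - j))%N by lia.
  rewrite big_split_ord /=; apply: dvdp_mulr.
  suff -> : \prod_(i < j) ('X^m - (z ^+ bump 0 i)%:P) = P m j by [].
  by apply: eq_bigr => i _; rewrite /bump add1n.
- rewrite hornerM mulf_neq0 // /P horner_prod; apply/prodf_neq0 => i _.
  rewrite hornerD hornerN hornerXn hornerC expr1n subr_eq0 eq_sym.
  rewrite -(expr0 z) (eq_prim_root_expr pz) mod0n modn_small; last by have := ltn_ord i; lia.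
  done.
Qed.

(* F is a finite field of order q = #|F| (a prime power); degree k means size f = k+1. *)
Theorem lemma5p4 (F : finFieldType) (r d k : nat) :
  prime r -> (r %| #|F| - 1)%N -> (0 < d)%N ->
  (1 <= k <= r ^ d - 1)%N ->
  exists f : {poly F},
    size f = k.+1 /\ f %| 'X^(r ^ d) - 1 /\ f.[1] != 0.
Proof.
move=> pr rd d0 /andP[_ kd].
have [z pz] := prim_r _ _ pr rd.
have rd0 : (0 < r ^ d)%N by rewrite expn_gt0 prime_gt0.
have kl : (k < r ^ d)%N by move: kd; rewrite subn1 -ltnS prednK.
exact: (main_ind _ _ _ pz d k kl).
Qed.
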